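(* Let $G$ be a connected graph of order $n\geq 2$. Then $\mathrm{ldim}_f(G)\geq \dfrac{n}{n-\mathrm{ldim}(G)+1}$.
   Context: All graphs are finite, simple and connected; $d$ is the shortest-path distance. For an edge $uv$, $L(uv)=\{x\in V(G): d(u,x)\neq d(v,x)\}$. A set $W\subseteq V(G)$ is a local resolving set if $W\cap L(uv)\neq\emptyset$ for every edge $uv$; $\mathrm{ldim}(G)$ is the minimum cardinality of a local resolving set. A function $f:V(G)\to[0,1]$ is a local resolving function if $\sum_{x\in L(uv)}f(x)\geq 1$ for every edge $uv$; $\mathrm{ldim}_f(G)$ is the minimum of $\sum_v f(v)$ over all local resolving functions. *)

(* Defs.v *)
From HB Require Import structures.
From mathcomp Require Import all_boot all_order all_algebra.
Set Implicit Arguments. Unset Strict Implicit. Unset Printing Implicit Defensive.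
Import Order.TTheory GRing.Theory Num.Theory.

Section Graph.
Variable T : finType.
Variable e : rel T.

Definition simple_connected_graph : Prop :=
  symmetric e /\ irreflexive e /\ (forall u v : T, connect e u v).

Fixpoint ball (k : nat) (u : T) : {set T} :=
  match k with
  | 0 => [set u]
  | k'.+1 => ball k' u :|: [set y | [exists x in ball k' u, e x y]]
  end.

(* shortest-path distance: least k with v in ball k u
   (exact for connected graphs, where d(u,v) <= #|T| - 1) *)
Definition dist (u v : T) : nat :=
  \big[minn/#|T|]_(k < #|T|.+1 | v \in ball k u) (k : nat).

Definition Lset (u v : T) : {set T} := [set x | dist u x != dist v x].

Definition local_resolving_set (W : {set T}) : bool :=
  [forall u, forall v, e u v ==> (W :&: Lset u v != set0)].

(* ldim(G): minimum cardinality of a local resolving set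
   (V itself is local resolving, so the minimum is over a nonempty family) *)
Definition ldim : nat :=
  \big[minn/#|T|]_(W : {set T} | local_resolving_set W) #|W|.

Definition local_resolving_function (R : realFieldType) (f : T -> R) : Prop :=
  (forall x, 0 <= f x <= 1)%R /\
  (forall u v, e u v -> (1 <= \sum_(x in Lset u v) f x)%R).

End Graph.

(* Main.v *)
Require Import Defs.
From HB Require Import structures.
From mathcomp Require Import all_boot all_order all_algebra.
From mathcomp Require Import zify ring lra.
Import Order.TTheory GRing.Theory Num.Theory.

Section Aux.
Variable T : finType.
Variable e : rel T.

Lemma ldim_le W : local_resolving_set e W -> (ldim e <= #|W|)%N.
Proof.
move=> HW; rewrite /ldim.
have : W \in index_enum {set T} by rewrite mem_index_enum.
elim: (index_enum _) => [|a s IH] //=.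
rewrite big_cons inE => /orP [/eqP <-|Hs].
  by rewrite HW geq_minl.
case: ifP => _; last exact: IH.
by rewrite geq_min IH ?orbT.
Qed.

Lemma ldim_le_n : (ldim e <= #|T|)%N.
Proof.
rewrite /ldim; apply: (big_ind (fun x => x <= #|T|)%N) => //.
  by move=> x y hx hy; rewrite geq_min hx.
by move=> W _; rewrite max_card.
Qed.

Lemma ldim_ge1 : simple_connected_graph e -> (2 <= #|T|)%N -> (1 <= ldim e)%N.
Proof.
move=> [Hs [Hi Hc]] Hn; rewrite /ldim.
apply: (big_ind (fun x => 1 <= x)%N); first by lia.
  by move=> x y hx hy; rewrite leq_min hx.
move=> W HW; rewrite card_gt0; apply/negP => /eqP W0.
move: HW; rewrite W0 /local_resolving_set.
have [u [v uv]] : exists u v : T, u != v.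
  have : (1 < #|T|)%N by [].
  rewrite -(cardsT T) => /card_gt1P [u [v [_ _ uv]]]; by exists u, v.
move: (Hc u v) => /connectP [p Hp Hl].
case: p Hp Hl => [|y p] /=; first by move=> _ Hl; rewrite Hl eqxx in uv.
move=> /andP [Huy _] _ /forallP /(_ u) /forallP /(_ y).
by rewrite Huy set0I eqxx.
Qed.

End Aux.

Theorem theorem2p12 (R : realFieldType) (T : finType) (e : rel T) :
  simple_connected_graph e -> 2 <= #|T| ->
  forall f : T -> R, local_resolving_function e f ->
  ((#|T|%:R / (#|T| - ldim e + 1)%:R) <= \sum_(v : T) f v)%R.
Proof.
move=> Hg Hn f [Hf01 Hf].
have H1 := @ldim_ge1 T e Hg Hn.
have H2 := @ldim_le_n T e.
set m := (#|T| - ldim e + 1)%N.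
have Hf0 : forall x, (0 <= f x)%R by move=> x; case/andP: (Hf01 x).
have base : forall A : {set T}, (m <= #|A|)%N -> (1 <= \sum_(x in A) f x)%R.
  move=> A HA.
  case: (boolP (local_resolving_set e (~: A))) => HW.
    have := @ldim_le T e _ HW; rewrite cardsCs setCK; lia.
  move: HW; rewrite /local_resolving_set negb_forall => /existsP [u].
  rewrite negb_forall => /existsP [v]; rewrite negb_imply => /andP [Huv].
  rewrite negbK => /eqP H0.
  apply: (le_trans (Hf u v Huv)).
  rewrite (big_setID (Lset e u v) (A := A)) /=.
  have -> : A :&: Lset e u v = Lset e u v.
    apply/setIidPr/subsetP => x Hx; apply/negPn/negP => HxA.
    have : x \in ~: A :&: Lset e u v by rewrite inE in_setC HxA Hx.
    by rewrite H0 inE.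
  by rewrite lerDl; apply: sumr_ge0 => x _.
have claim : forall k (A : {set T}), #|A| = (m + k)%N ->
    ((m + k)%:R <= m%:R * \sum_(x in A) f x)%R.
  elim=> [|k IH] A HA.
    rewrite addn0 -[X in (X <= _)%R]mulr1; apply: ler_wpM2l => //.
    by apply: base; rewrite HA addn0.
  have [x0 Hx0] : exists x0, x0 \in A.
    apply/set0Pn; rewrite -card_gt0 HA; lia.
  case: (arg_maxP f Hx0) => x HxA0 Hmax.
  have HxA : x \in A := HxA0.
  have HB : #|A :\ x| = (m + k)%N by rewrite (cardsD1 x A) HxA in HA; lia.
  have IHB := IH _ HB.
  rewrite (big_setD1 x HxA) /=.
  have Hle : (\sum_(y in A :\ x) f y <= (m + k)%:R * f x)%R.
    rewrite -HB mulr_natl -sumr_const.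
    apply: ler_sum => y; rewrite inE => /andP [_ Hy]; exact: Hmax.
  have Hmk : (0 < (m + k)%:R :> R)%R by rewrite ltr0n; lia.
  have Hfx : (1 <= m%:R * f x)%R.
    have : ((m + k)%:R <= (m + k)%:R * (m%:R * f x) :> R)%R.
      apply: (le_trans IHB).
      rewrite mulrCA; apply: ler_wpM2l => //.
    by rewrite -[X in (X <= _)%R -> _]mulr1 ler_pM2l.
  rewrite addnS -addn1 natrD mulrDr; lra.
have Hm : (0 < m)%N by rewrite /m; lia.
have := claim (#|T| - m)%N setT.
rewrite cardsT subnKC; last by rewrite /m; lia.
move=> /(_ erefl) H.
rewrite ler_pdivrMr ?ltr0n // mulrC.
apply: (le_trans H); rewrite mulrC; under eq_bigl do rewrite inE; by rewrite [X in (_ <= X)%R]mulrC.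
Qed.
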